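(* Let $A$ be an integral domain whose integral closure $A'$ has a representation $A'=\bigcap_{V\in\mathcal V}V$, where $\mathcal V$ is a family of valuation overrings of $A$ of finite character. If $B$ is a finitely generated (as an $A$-algebra) overring of $A$ that is flat over $A$ and well-centered on $A$, then $B$ is a localization of $A$.
   Context: For an integral domain $A$ with field of fractions $K$, an overring of $A$ is a subring $B$ of $K$ with $A\subseteq B$; a valuation overring is an overring that is a valuation domain. A family $\mathcal V$ of such valuation domains has finite character if each nonzero element of $K$ is a unit in all but finitely many $V\in\mathcal V$. An overring $B$ is well-centered on $A$ if for each $b\in B$ there is a unit $u$ of $B$ with $ub\in A$. $B$ is a localization of $A$ if $B=S^{-1}A$ for some multiplicatively closed set $S$ of nonzero elements of $A$. *)

(* Defs.v *)
From Stdlib Require List.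
From HB Require Import structures.
From mathcomp Require Import all_boot all_order all_algebra.
Set Implicit Arguments. Unset Strict Implicit. Unset Printing Implicit Defensive.
Import Order.TTheory GRing.Theory Num.Theory.
Local Open Scope ring_scope.

Section Defs.
Variable K : fieldType.

Definition is_subring (S : K -> Prop) : Prop :=
  S 1 /\ (forall x y, S x -> S y -> S (x - y)) /\
  (forall x y, S x -> S y -> S (x * y)).

(* K is the field of fractions of the subring A (A is then an integral domain) *)
Definition is_frac_field_of (A : K -> Prop) : Prop :=
  forall x : K, exists a b, A a /\ A b /\ b != 0 /\ x = a / b.

Definition overring (A B : K -> Prop) : Prop :=
  is_subring B /\ (forall x, A x -> B x).

Definition valuation_subring (V : K -> Prop) : Prop :=
  is_subring V /\ (forall x : K, x != 0 -> V x \/ V x^-1).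

Definition valuation_overring (A V : K -> Prop) : Prop :=
  overring A V /\ valuation_subring V.

Definition unit_in (S : K -> Prop) (x : K) : Prop := S x /\ x != 0 /\ S x^-1.

Definition integral_over (A : K -> Prop) (x : K) : Prop :=
  exists p : {poly K}, p \is monic /\ (forall i, A p`_i) /\ root p x.

Definition integral_closure (A : K -> Prop) : K -> Prop := integral_over A.

Definition finite_character (I : Type) (V : I -> K -> Prop) : Prop :=
  forall x : K, x != 0 ->
    exists s : seq I, forall i, ~ unit_in (V i) x -> List.In i s.

Definition generated_algebra (A : K -> Prop) (s : seq K) : K -> Prop :=
  fun x => forall S : K -> Prop, is_subring S -> (forall a, A a -> S a) ->
             (forall y, List.In y s -> S y) -> S x.

Definition fg_algebra (A B : K -> Prop) : Prop :=
  exists s : seq K, forall x, B x <-> generated_algebra A s x.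

(* B is flat as an A-module, via the equational criterion of flatness:
   every A-linear relation among elements of B is trivial. *)
Definition flat_over (A B : K -> Prop) : Prop :=
  forall (n : nat) (a b : 'I_n -> K),
    (forall i, A (a i)) -> (forall i, B (b i)) ->
    \sum_(i < n) a i * b i = 0 ->
    exists (m : nat) (c : 'I_n -> 'I_m -> K) (y : 'I_m -> K),
      (forall i j, A (c i j)) /\ (forall j, B (y j)) /\
      (forall i, b i = \sum_(j < m) c i j * y j) /\
      (forall j, \sum_(i < n) a i * c i j = 0).

Definition well_centered (A B : K -> Prop) : Prop :=
  forall b, B b -> exists u, unit_in B u /\ A (u * b).

Definition mult_closed_nonzero (A S : K -> Prop) : Prop :=
  (forall s, S s -> A s /\ s != 0) /\ S 1 /\
  (forall s t, S s -> S t -> S (s * t)).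

Definition localization_of (A B : K -> Prop) : Prop :=
  exists S : K -> Prop, mult_closed_nonzero A S /\
    (forall x, B x <-> exists a s, A a /\ S s /\ x = a / s).

End Defs.

(* Main.v *)
Require Import Defs.
From HB Require Import structures.
From mathcomp Require Import all_boot all_order all_algebra.
Local Open Scope ring_scope.
From mathcomp Require Import ring.
From Stdlib Require Import Classical.
Set Implicit Arguments. Unset Strict Implicit. Unset Printing Implicit Defensive.
Import GRing.Theory.


Section Sub.
Variable K : fieldType.
Variable S : K -> Prop.
Hypothesis HS : is_subring S.

Lemma sr1 : S 1. Proof. by case: HS. Qed.
Lemma srB x y : S x -> S y -> S (x - y). Proof. by move: HS => [_ [H _]]; apply: H. Qed.
Lemma srM x y : S x -> S y -> S (x * y). Proof. by move: HS => [_ [_ H]]; apply: H. Qed.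
Lemma sr0 : S 0. Proof. by rewrite -(subrr 1); apply: srB; apply: sr1. Qed.
Lemma srN x : S x -> S (- x). Proof. by move=> Hx; rewrite -sub0r; apply: srB => //; apply: sr0. Qed.
Lemma srD x y : S x -> S y -> S (x + y).
Proof. by move=> Hx Hy; rewrite -(opprK y); apply: srB => //; apply: srN. Qed.
Lemma srX x n : S x -> S (x ^+ n).
Proof. by move=> Hx; elim: n => [|n IH]; [rewrite expr0; apply: sr1 | rewrite exprS; apply: srM]. Qed.
Lemma srn n : S n%:R.
Proof. elim: n => [|n IH]; first exact: sr0. by rewrite -addn1 natrD; apply: srD => //; apply: sr1. Qed.
Lemma srsum (I : Type) (r : seq I) (F : I -> K) : (forall i, S (F i)) -> S (\sum_(i <- r) F i).
Proof. move=> H; apply: (big_rec S); [exact: sr0 | move=> i x _ Hx; exact: srD]. Qed.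

Definition geo (n : nat) (x : K) := \sum_(j < n) x ^+ j.
Lemma geoS n x : geo n.+1 x = 1 + x * geo n x.
Proof. rewrite /geo big_ord_recl expr0 mulr_sumr; congr (_ + _); apply: eq_bigr => i _; by rewrite exprS. Qed.
Lemma geoSr n x : geo n.+1 x = geo n x + x ^+ n.
Proof. by rewrite /geo big_ord_recr. Qed.
Lemma geoS_in n x : S x -> S (geo n x).
Proof. move=> Hx; rewrite /geo; apply: srsum => i; exact: srX. Qed.
End Sub.

Lemma geo_geo (K : fieldType) n (x : K) : (x - 1) * geo n x = x ^+ n - 1.
Proof. elim: n => [|n IH]; first by rewrite /geo big_ord0 expr0 mulr0 subrr.
rewrite geoSr mulrDr IH exprS; ring. Qed.
Lemma geo_add (K : fieldType) m n (x : K) : geo (m + n) x = geo m x + x ^+ m * geo n x.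
Proof. elim: n => [|n IH]; first by rewrite addn0 /geo big_ord0 mulr0 addr0.
by rewrite addnS !geoSr IH exprD; ring. Qed.
Lemma geo_mul (K : fieldType) a b (x : K) : geo (a * b) x = geo a x * geo b (x ^+ a).
Proof. elim: b => [|b IH]; first by rewrite muln0 /geo !big_ord0 mulr0.
by rewrite mulnS addnC geo_add IH geoSr -exprM; ring. Qed.


Section Val.
Variable K : fieldType.
Variable V : K -> Prop.
Hypothesis HV : valuation_subring V.
Let HS : is_subring V. Proof. by case: HV. Qed.
Let Hval x : x != 0 -> V x \/ V x^-1. Proof. by case: HV => _; apply. Qed.

Definition nonunit x := V x /\ ~ unit_in V x.

Lemma nu0 : nonunit 0.
Proof. split; first exact: (sr0 HS). by case=> _ []; rewrite eqxx. Qed.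

Lemma nu_mul a r : V r -> nonunit a -> nonunit (a * r).
Proof.
move=> Vr [Va Na]; split; first exact: (srM HS).
case=> _ [nz Vi]; apply: Na; split => //.
have az : a != 0 by apply: contraNneq nz => ->; rewrite mul0r.
split => //. have rz : r != 0 by apply: contraNneq nz => ->; rewrite mulr0.
have -> : a^-1 = r * (a * r)^-1 by rewrite invfM mulrCA mulfV // mulr1.
exact: (srM HS).
Qed.

Lemma nu_add a b : nonunit a -> nonunit b -> nonunit (a + b).
Proof.
move=> Na Nb; have [->|az] := eqVneq a 0; first by rewrite add0r.
have [->|bz] := eqVneq b 0; first by rewrite addr0.
have abz : a / b != 0 by rewrite mulf_neq0 // invr_eq0.
case: (Hval abz) => H.
- have -> : a + b = b * (a / b + 1) by rewrite mulrDr mulrCA mulfV // mulr1 mulr1.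
  apply: nu_mul => //; apply: (srD HS) => //; exact: (sr1 HS).
- rewrite invf_div in H.
  have -> : a + b = a * (1 + b / a) by rewrite mulrDr mulr1 mulrCA mulfV // mulr1.
  apply: nu_mul => //; apply: (srD HS) => //; exact: (sr1 HS).
Qed.

Lemma u_add x y : nonunit x -> unit_in V y -> unit_in V (x + y).
Proof.
move=> Nx Uy; apply: NNPP => H.
have Vxy : V (x + y) by apply: (srD HS) => //; [case: Nx | case: Uy].
have N1 : nonunit (x + y) by [].
have N2 : nonunit (- x) by rewrite -mulrN1; apply: nu_mul => //; apply: (srN HS); exact: (sr1 HS).
have := nu_add N1 N2; rewrite addrC addKr => -[_ H2]; exact: H2 Uy.
Qed.

Lemma u_mul x y : unit_in V x -> unit_in V y -> unit_in V (x * y).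
Proof.
move=> [Vx [xz Vx']] [Vy [yz Vy']]; split; first exact: (srM HS).
split; first by rewrite mulf_neq0. rewrite invfM; exact: (srM HS).
Qed.

Lemma u_exp x n : unit_in V x -> unit_in V (x ^+ n).
Proof.
move=> Ux; elim: n => [|n IH]; first by rewrite expr0; split; [exact: (sr1 HS)|rewrite oner_eq0 invr1; split=>//; exact: (sr1 HS)].
by rewrite exprS; apply: u_mul.
Qed.

Lemma u1 : unit_in V 1.
Proof. by split; [exact: (sr1 HS)|rewrite oner_eq0 invr1; split=>//; exact: (sr1 HS)]. Qed.

Lemma geo_val (x : K) (N : nat) : (0 < N)%N ->
  ((unit_in V x /\ exists n, (0 < n)%N /\ nonunit (geo n x)) -> nonunit (geo N x)) ->
  geo N.+1 x != 0 /\ V (geo N.+1 x)^-1 /\ V (x / geo N.+1 x).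
Proof.
move=> N0 Hbad; set g := geo N.+1 x.
have fromU : unit_in V g -> V (x / g) -> g != 0 /\ V g^-1 /\ V (x / g).
  by move=> [_ [gz Vg]] Vxg.
case: (classic (V x)) => Vx.
- have Vg : V g by apply: (geoS_in HS).
  case: (classic (unit_in V x)) => Ux.
  + have Ug : unit_in V g.
      case: (classic (exists n, (0 < n)%N /\ nonunit (geo n x))) => Hb.
      * rewrite /g geoSr; apply: u_add; first exact: Hbad.
        exact: u_exp.
      * apply: NNPP => nU; apply: Hb; exists N.+1; split => //.
    apply: fromU => //; apply: (srM HS) => //; by case: Ug => _ [].
  + have Nx : nonunit x by [].
    have Ug : unit_in V g.
      rewrite /g geoS addrC; apply: u_add; last exact: u1.
      by apply: nu_mul => //; apply: (geoS_in HS).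
    apply: fromU => //; apply: (srM HS) => //; by case: Ug => _ [].
- have xz : x != 0 by apply/eqP => x0; apply: Vx; rewrite x0; exact: (sr0 HS).
  set y := x^-1.
  have Vy : V y by case: (Hval xz).
  have Ny : nonunit y by split => // -[_ [_]]; rewrite /y invrK.
  have yz : y != 0 by rewrite invr_eq0.
  have yx : y * x = 1 by rewrite mulVf.
  have xy : x * y = 1 by rewrite mulfV.
  have E : y ^+ N * (1 - y) * g = 1 - y ^+ N.+1.
    have G := geo_geo N.+1 x.
    transitivity (y ^+ N.+1 * ((x - 1) * g)).
      have h : y * (x - 1) = 1 - y by rewrite mulrBr yx mulr1.
      rewrite exprS -h; set z := y ^+ N; ring.
    by rewrite G mulrBr mulr1 -exprMn yx expr1n.
  have Uw : unit_in V (1 - y ^+ N.+1).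
    rewrite addrC; apply: u_add; last exact: u1.
    rewrite exprS -mulrN; apply: nu_mul => //; apply: (srN HS); exact: (srX HS).
  case: (Uw) => _ [wz Vw].
  have zz : y ^+ N * (1 - y) != 0.
    by apply: contraNneq wz => h; rewrite -E h mul0r.
  have gz : g != 0.
    by apply: contraNneq wz => h; rewrite -E h mulr0.
  have gi : g^-1 = y ^+ N * (1 - y) / (1 - y ^+ N.+1).
    rewrite -E; set z := y ^+ N; field.
    by move: zz; rewrite mulf_eq0 negb_or => /andP[-> ->]; rewrite gz.
  split => //; split.
  + rewrite gi; apply: (srM HS) => //; apply: (srM HS); [exact: (srX HS) | apply: (srB HS) => //; exact: (sr1 HS)].
  + have [N' eN] : exists N', N = N'.+1 by case: (N) N0 => // N' _; exists N'.
    rewrite gi; rewrite eN in wz Vw *.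
    have -> : x * (y ^+ N'.+1 * (1 - y) / (1 - y ^+ N'.+2)) = y ^+ N' * (1 - y) / (1 - y ^+ N'.+2).
      by rewrite exprS !mulrA xy mul1r.
    apply: (srM HS) => //; apply: (srM HS); [exact: (srX HS) | apply: (srB HS) => //; exact: (sr1 HS)].
Qed.
End Val.


Section Fam.
Variable K : fieldType.
Variable I : Type.
Variable V : I -> K -> Prop.
Hypothesis HV : forall i, valuation_subring (V i).
Let HS i : is_subring (V i). Proof. by case: (HV i). Qed.

Lemma choose_N x (L : seq I) : exists N, (0 < N)%N /\ forall i, List.In i L ->
  (unit_in (V i) x /\ exists n, (0 < n)%N /\ nonunit (V i) (geo n x)) -> nonunit (V i) (geo N x).
Proof.
elim: L => [|j L [N' [N'0 IH]]]; first by exists 1%N.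
case: (classic (unit_in (V j) x /\ exists n, (0 < n)%N /\ nonunit (V j) (geo n x))) => Hj.
- case: (Hj) => [[Vx _] [n [n0 Nn]]].
  exists (N' * n)%N; split; first by rewrite muln_gt0 N'0.
  move=> i [<-|iL] Hi.
  + rewrite mulnC geo_mul; apply: nu_mul => //; apply: geoS_in => //; exact: srX.
  + rewrite geo_mul; apply: nu_mul => //; first by apply: geoS_in => //; apply: srX => //; case: Hi => -[].
    exact: IH.
- exists N'; split => // i [<-|iL] Hi; [by case: (Hj Hi) | exact: IH].
Qed.

Lemma choose_g x (L : seq I) : exists N, forall i, List.In i L ->
  geo N.+1 x != 0 /\ V i (geo N.+1 x)^-1 /\ V i (x / geo N.+1 x).
Proof.
have [N [N0 H]] := choose_N x L; exists N => i iL.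
apply: geo_val => //; exact: H.
Qed.

Lemma choose_b (L : seq I) (s : seq K) : exists b,
  (forall P, is_subring P -> (forall y, List.In y s -> P y) -> P b) /\
  forall i, List.In i L -> b != 0 /\ V i b^-1 /\ forall y, List.In y s -> V i (y / b).
Proof.
elim: s => [|x s [b' [Pb' Hb']]].
  exists 1; split; first by move=> P HP _; exact: sr1.
  move=> i _; split; first exact: oner_neq0. rewrite invr1; split => //; exact: sr1.
have [N HN] := choose_g x L; set g := geo N.+1 x in HN.
exists (g * b'); split.
  move=> P HP Hs; apply: srM => //; last by apply: Pb' => // y ys; apply: Hs; right.
  by apply: geoS_in => //; apply: Hs; left.
move=> i iL; have [gz [Vg Vxg]] := HN i iL; have [bz [Vb Vyb]] := Hb' i iL.
split; first by rewrite mulf_neq0.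
rewrite invfM; split; first exact: srM.
move=> y [<-|ys].
- by rewrite mulrA; apply: srM.
- by rewrite mulrCA; apply: srM => //; exact: Vyb.
Qed.
End Fam.


Section Lin.
Variable K : fieldType.

Inductive lin (P Q : K -> Prop) : K -> Prop :=
| lin0 : lin P Q 0
| linS a g x : P a -> Q g -> lin P Q x -> lin P Q (a * g + x).

Lemma lin_add P Q x y : lin P Q x -> lin P Q y -> lin P Q (x + y).
Proof. move=> Hx Hy; elim: Hx => [|a g x' Pa Qg _ IH]; first by rewrite add0r.
by rewrite -addrA; apply: linS. Qed.

Lemma lin_in P Q a g : P a -> Q g -> lin P Q (a * g).
Proof. by move=> Pa Qg; rewrite -[_ * _]addr0; apply: linS => //; apply: lin0. Qed.

Lemma lin_scale P Q c x : (forall a, P a -> P (c * a)) -> lin P Q x -> lin P Q (c * x).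
Proof. move=> Hc; elim => [|a g x' Pa Qg _ IH]; first by rewrite mulr0; apply: lin0.
by rewrite mulrDr mulrA; apply: linS => //; apply: Hc. Qed.

Lemma lin_mul P1 Q1 P2 Q2 P3 Q3 x y :
  (forall a b, P1 a -> P2 b -> P3 (a * b)) -> (forall g h, Q1 g -> Q2 h -> Q3 (g * h)) ->
  lin P1 Q1 x -> lin P2 Q2 y -> lin P3 Q3 (x * y).
Proof.
move=> HP HQ Hx Hy; elim: Hx => [|a g x' Pa Qg _ IH]; first by rewrite mul0r; apply: lin0.
rewrite mulrDl; apply: lin_add => //.
elim: Hy => [|b h y' Pb Qh _ IH2]; first by rewrite mulr0; apply: lin0.
rewrite mulrDr; apply: lin_add => //.
have -> : a * g * (b * h) = (a * b) * (g * h) by ring.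
by apply: lin_in; [apply: HP | apply: HQ].
Qed.

Lemma lin_sub P Q1 Q2 x : (forall a y, P a -> lin P Q2 y -> lin P Q2 (a * y)) ->
  (forall g, Q1 g -> lin P Q2 g) -> lin P Q1 x -> lin P Q2 x.
Proof. move=> Hs HQ; elim => [|a g x' Pa Qg _ IH]; first exact: lin0.
by apply: lin_add => //; apply: Hs => //; apply: HQ. Qed.

Lemma lin_mono P1 P2 Q x : (forall a, P1 a -> P2 a) -> lin P1 Q x -> lin P2 Q x.
Proof. move=> H; elim => [|a g x' Pa Qg _ IH]; [exact: lin0 | by apply: linS => //; apply: H]. Qed.

Lemma lin_sum P Q m (c y : 'I_m -> K) : (forall j, P (c j) /\ Q (y j)) -> lin P Q (\sum_(j < m) c j * y j).
Proof. move=> H; apply: (big_rec (lin P Q)); first exact: lin0.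
move=> j x _ Hx; have [? ?] := H j; exact: linS. Qed.

Variable A : K -> Prop.
Hypothesis HA : is_subring A.

Definition span (G : seq K) := lin A (fun g => g \in G).

Lemma span_scale G c x : A c -> span G x -> span G (c * x).
Proof. by move=> Ac; apply: lin_scale => //; move=> a Aa; apply: srM. Qed.

Lemma span_add G x y : span G x -> span G y -> span G (x + y).
Proof. exact: lin_add. Qed.

Lemma span_opp G x : span G x -> span G (- x).
Proof. by move=> H; rewrite -mulN1r; apply: span_scale => //; apply: (srN HA); apply: (sr1 HA). Qed.

Lemma span_sub G H x : (forall g, g \in G -> span H g) -> span G x -> span H x.
Proof. move=> HG; apply: lin_sub => //; move=> a y Aa Hy; exact: span_scale. Qed.

Lemma span_in G g : g \in G -> span G g.
Proof. by move=> Hg; rewrite -[g]mul1r; apply: lin_in => //; apply: (sr1 HA). Qed.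

Definition pr (G H : seq K) := [seq g * h | g <- G, h <- H].

Lemma span_mul G H x y : span G x -> span H y -> span (pr G H) (x * y).
Proof. apply: lin_mul; first by move=> a b; apply: (srM HA).
by move=> g h Hg Hh; apply/allpairsP; exists (g, h). Qed.

Lemma span_cond G c x : A c -> (forall g, g \in G -> A (c * g)) -> span G x -> A (c * x).
Proof. move=> Ac Hc; elim => [|a g x' Aa Hg _ IH]; first by rewrite mulr0; apply: (sr0 HA).
by rewrite mulrDr mulrCA; apply: (srD HA) => //; apply: (srM HA) => //; apply: Hc. Qed.

Definition Gm (G : seq K) := span G 1 /\ forall g h, g \in G -> h \in G -> span G (g * h).

Lemma Gm_mul G x y : Gm G -> span G x -> span G y -> span G (x * y).
Proof. move=> [_ HG] Hx Hy; apply: (span_sub (G := pr G G)); last exact: span_mul.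
by move=> z /allpairsP [[g h] [/= Hg Hh ->]]; apply: HG. Qed.

Lemma span_left G H x : Gm H -> span G x -> span (pr G H) x.
Proof. by move=> [H1 _] Hx; rewrite -[x]mulr1; apply: span_mul. Qed.
Lemma span_right G H x : Gm G -> span H x -> span (pr G H) x.
Proof. by move=> [G1 _] Hx; rewrite -[x]mul1r; apply: span_mul. Qed.

Lemma Gm_pr G H : Gm G -> Gm H -> Gm (pr G H).
Proof.
move=> HG HH; split; first by rewrite -[1]mulr1; apply: span_mul; [case: HG|case: HH].
move=> z w /allpairsP [[g h] [/= Hg Hh ->]] /allpairsP [[g' h'] [/= Hg' Hh' ->]].
have -> : g * h * (g' * h') = (g * g') * (h * h') by ring.
by apply: span_mul; [case: HG => _; apply | case: HH => _; apply].
Qed.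

Lemma Gm1 : Gm [:: 1].
Proof. split; first by apply: span_in; rewrite inE. move=> g h; rewrite !inE => /eqP -> /eqP ->.
by rewrite mulr1; apply: span_in; rewrite inE. Qed.

Lemma integral_span e : integral_over A e -> exists G : seq K, Gm G /\ span G e /\
  forall g, g \in G -> exists j, g = e ^+ j.
Proof.
move=> [p [mp [Ap rp]]].
have sp : (1 < size p)%N.
  rewrite ltnNge; apply/negP => /size1_polyC ep.
  move: mp rp; rewrite ep => /monicP; rewrite lead_coefC => ->.
  by rewrite /root hornerC oner_eq0.
set d := (size p).-1.
have ed : size p = d.+1 by rewrite /d prednK // ltnW.
set G := [seq e ^+ j | j <- iota 0 d].
have inG j : (j < d)%N -> e ^+ j \in G by move=> jd; apply: map_f; rewrite mem_iota.
have key : span G (e ^+ d).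
  have : p.[e] = 0 by apply/eqP.
  rewrite horner_coef ed big_ord_recr /= -/d.
  have -> : p`_d = 1 by move/monicP: mp; rewrite /lead_coef ed.
  rewrite mul1r => /eqP; rewrite addrC addr_eq0 => /eqP ->.
  rewrite -sumrN; apply: (big_rec (span G)); first exact: lin0.
  move=> i x _ Hx; rewrite -mulNr; apply: linS => //; first by apply: (srN HA).
  exact: inG.
have emul x : span G x -> span G (e * x).
  elim => [|a g x' Aa Hg _ IH]; first by rewrite mulr0; apply: lin0.
  rewrite mulrDr mulrCA; apply: span_add => //; apply: span_scale => //.
  move/mapP: Hg => [j]; rewrite mem_iota add0n => /andP [_ jd] ->.
  rewrite -exprS; case: (ltngtP j.+1 d) => h.
  - by apply: span_in; apply: inG.
  - by move: (leq_ltn_trans jd h); rewrite ltnn.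
  - by rewrite h.
have pw n : span G (e ^+ n).
  elim: n => [|n IH]; first by apply: span_in; apply: inG; rewrite -ltnS -ed.
  by rewrite exprS; apply: emul.
exists G; split; last split.
- split; first by rewrite -(expr0 e).
  move=> g h /mapP [i _ ->] /mapP [j _ ->]; by rewrite -exprD.
- by rewrite -[e]expr1.
- by move=> g /mapP [j _ ->]; exists j.
Qed.

End Lin.


Section Flat.
Variable K : fieldType.
Variables A B : K -> Prop.
Hypothesis HA : is_subring A.
Hypothesis HB : is_subring B.
Hypothesis FF : is_frac_field_of A.
Hypothesis Fl : flat_over A B.

Lemma flat_gen g : B g -> lin (fun c => A c /\ A (c * g)) B 1.
Proof.
move=> Bg; have [a [b [Aa [Ab [bz eg]]]]] := FF g; subst g.
pose av := fun i : 'I_2 => if i == ord0 then a else - b.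
pose bv := fun i : 'I_2 => if i == ord0 then 1 else a / b.
have [m [c [y [Ac [By [Hb Hr]]]]]] : exists (m : nat) (c : 'I_2 -> 'I_m -> K) (y : 'I_m -> K),
      (forall i j, A (c i j)) /\ (forall j, B (y j)) /\
      (forall i, bv i = \sum_(j < m) c i j * y j) /\
      (forall j, \sum_(i < 2) av i * c i j = 0).
  apply: Fl.
  - by move=> i; rewrite /av; case: ifP => _ //; apply: (srN HA).
  - by move=> i; rewrite /bv; case: ifP => _ //; exact: (sr1 HB).
  - rewrite big_ord_recr big_ord_recr big_ord0 /= /av /bv /=; field; done.
have H0 := Hb ord0; rewrite /bv eqxx in H0; rewrite H0; apply: lin_sum => j; split => //; split => //.
have := Hr j; rewrite big_ord_recr big_ord_recr big_ord0 /= /av /= add0r => h.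
have e0 : widen_ord (leqnSn 1) ord_max = ord0 :> 'I_2 by apply: val_inj.
rewrite e0 mulNr in h; move/eqP: h; rewrite subr_eq0 => /eqP h2.
have -> : c ord0 j * (a / b) = c ord_max j.
  by rewrite mulrA [c ord0 j * a]mulrC h2 mulrAC mulfV // mul1r.
exact: Ac.
Qed.


Lemma cond_gen (G : seq K) : (forall g, g \in G -> B g) ->
  lin (fun c => A c /\ forall g, g \in G -> A (c * g)) B 1.
Proof.
elim: G => [|g G IH] HG.
  rewrite -[1]mulr1; apply: lin_in; last exact: (sr1 HB).
  by split; [exact: (sr1 HA) | move=> g; rewrite in_nil].
have Bg : B g by apply: HG; rewrite inE eqxx.
have HG' : forall h, h \in G -> B h by move=> h hG; apply: HG; rewrite inE hG orbT.
have IH' := IH HG'.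
rewrite -[1]mulr1; apply: (lin_mul _ _ (flat_gen Bg) IH').
- move=> c d [Ac Acg] [Ad Adg]; split; first exact: (srM HA).
  move=> h; rewrite inE => /orP [/eqP ->|hG].
  + by rewrite mulrAC; apply: (srM HA).
  + by rewrite -mulrA; apply: (srM HA) => //; apply: Adg.
- by move=> x y; apply: (srM HB).
Qed.
End Flat.


Section Build.
Variable K : fieldType.
Variables A B : K -> Prop.
Hypothesis HA : is_subring A.
Hypothesis HB : is_subring B.
Lemma build (es : seq K) : (forall e, List.In e es -> integral_over A e /\ B e) ->
  exists G, Gm A G /\ (forall g, g \in G -> B g) /\ forall e, List.In e es -> span A G e.
Proof.
elim: es => [|e es IH] H.
  exists [:: 1]; split; first exact: (Gm1 HA).
  split; last by []. move=> g; rewrite inE => /eqP ->; exact: (sr1 HB).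
have [ie Be] := H e (or_introl erefl).
have [G' [GG' [BG' SG']]] := IH (fun x hx => H x (or_intror hx)).
have [Ge [GGe [Se Pe]]] := integral_span HA ie.
exists (pr Ge G'); split; first exact: (Gm_pr HA).
split.
  move=> z /allpairsP [[g h] [/= Hg Hh ->]]; apply: (srM HB); last exact: BG'.
  by have [j ->] := Pe g Hg; apply: (srX HB).
move=> x [<-|xs]; [exact: (span_left HA) | apply: (span_right HA) => //; exact: SG'].
Qed.
End Build.

Unset Implicit Arguments.
Theorem theorem4p15 (K : fieldType) (A : K -> Prop)
  (I : Type) (V : I -> K -> Prop) (B : K -> Prop) :
  is_subring A -> is_frac_field_of A ->
  (forall i, valuation_overring A (V i)) ->
  finite_character V ->
  (forall x, integral_closure A x <-> forall i, V i x) ->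
  overring A B -> fg_algebra A B -> flat_over A B -> well_centered A B ->
  localization_of A B.
Proof.
move=> HA FF HVo Hfc Hint [HB HAB] [s Hs] Hflat Hwc.
have HV i : valuation_subring (V i) by case: (HVo i).
have HVS i : is_subring (V i) by case: (HV i).
have HAV i a : A a -> V i a by case: (HVo i) => -[_ H] _; apply: H.
have Bs y : List.In y s -> B y by move=> ys; apply/Hs => S _ _ HSs; exact: HSs.
have BV i : (forall y, List.In y s -> V i y) -> forall x, B x -> V i x.
  move=> Hi x /Hs Hx; apply: Hx; [exact: HVS | exact: HAV | exact: Hi].
have [L HL] : exists L : seq I, forall i, (exists y, List.In y s /\ ~ V i y) -> List.In i L.
  clear -Hfc HVS. elim: s => [|x s [L' HL']]; first by exists [::] => i [y [[] _]].
  case: (eqVneq x 0) => [x0|xz].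
  - exists L' => i [y [[<-|ys] Ny]]; last by apply: HL'; exists y.
    by exfalso; apply: Ny; rewrite x0; exact: (sr0 (HVS i)).
  - have [sx Hsx] := Hfc x xz.
    exists (sx ++ L')%list => i [y [[<-|ys] Ny]]; apply: List.in_or_app; [left | right].
    + apply: Hsx => -[Vx _]; exact: Ny Vx.
    + apply: HL'; by exists y.
have [b [Pb Hb]] := choose_b HV L s.
have Bb : B b by apply: Pb.
have [u [[Bu [uz Bui]] Aub]] := Hwc b Bb.
have Vu : forall i, V i u /\ forall y, List.In y s -> V i (u * y).
  move=> i; case: (classic (exists y, List.In y s /\ ~ V i y)) => Hi.
  - have [bz [Vbi Vyb]] := Hb i (HL i Hi).
    have ue : u = (u * b) * b^-1 by rewrite mulfK.
    split; first by rewrite ue; apply: (srM (HVS i)) => //; exact: HAV.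
    move=> y ys; have -> : u * y = (u * b) * (y / b) by field.
    apply: (srM (HVS i)); [exact: HAV | exact: Vyb].
  - have Hall : forall y, List.In y s -> V i y by move=> y ys; apply: NNPP => Ny; apply: Hi; exists y.
    split; first exact: BV Hall u Bu.
    move=> y ys; apply: BV Hall _ _; apply: (srM HB) => //; exact: Bs.
set t := u.
have tint : integral_over A t by apply: (proj2 (Hint t)) => i; case: (Vu i).
have tyint y : List.In y s -> integral_over A (t * y).
  by move=> ys; apply: (proj2 (Hint _)) => i; case: (Vu i) => _; apply.
have [G [GG [BG SG]]] : exists G, Gm A G /\ (forall g, g \in G -> B g) /\
    forall e, List.In e (t :: map (fun y => t * y) s) -> span A G e.
  apply: build => // e [<-|]; first by split.
  move/List.in_map_iff => [y [<- ys]]; split; first exact: tyint.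
  by apply: (srM HB) => //; apply: Bs.
have St : span A G t by apply: SG; left.
have Sty y : List.In y s -> span A G (t * y).
  by move=> ys; apply: SG; right; apply/List.in_map_iff; exists y.
have spt n : span A G (t ^+ n).
  elim: n => [|n IH]; first by rewrite expr0; case: GG.
  by rewrite exprS; apply: (Gm_mul HA).
have tNz n : t ^+ n != 0 by rewrite expf_neq0.
have BQ : forall x, B x -> exists N z, span A G z /\ x = z / t ^+ N.
  move=> x0 /Hs Hx; apply: (Hx (fun x => exists N z, span A G z /\ x = z / t ^+ N)).
  - split; first by exists 0%N, 1; split; [case: GG | rewrite expr0 divr1].
    split.
    + move=> x y [N [z [Sz ->]]] [N' [z' [Sz' ->]]].
      exists (N + N')%N, (z * t ^+ N' - z' * t ^+ N); split.
        by apply: span_add; [exact: (Gm_mul HA) | apply: (span_opp HA); exact: (Gm_mul HA)].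
      rewrite exprD; have := tNz N; have := tNz N'.
      set a1 := t ^+ N; set a2 := t ^+ N' => h1 h2; field.
      by rewrite h1 h2.
    + move=> x y [N [z [Sz ->]]] [N' [z' [Sz' ->]]].
      exists (N + N')%N, (z * z'); split; first exact: (Gm_mul HA).
      rewrite exprD; have := tNz N; have := tNz N'.
      set a1 := t ^+ N; set a2 := t ^+ N' => h1 h2; field.
      by rewrite h1 h2.
  - move=> a Aa; exists 0%N, (a * 1); split; first by apply: (span_scale HA) => //; case: GG.
    by rewrite expr0 divr1 mulr1.
  - move=> y ys; exists 1%N, (t * y); split; first exact: Sty.
    by rewrite expr1 [t * y]mulrC mulfK.
have C := cond_gen HA HB FF Hflat BG.
pose cc c := A c /\ forall z, span A G z -> A (c * z).
have C' : lin cc B 1.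
  apply: lin_mono C => c [Ac Hc]; split => // z; exact: span_cond.
have cc_mul c z : cc c -> span A G z -> cc (z * c).
  move=> [Ac Hc] Sz; split; first by rewrite mulrC; apply: Hc.
  move=> w Sw; rewrite [z * c]mulrC -mulrA; apply: Hc; exact: (Gm_mul HA).
have cc_add c d : cc c -> cc d -> cc (c + d).
  move=> [Ac Hc] [Ad Hd]; split; first exact: (srD HA).
  by move=> z Sz; rewrite mulrDl; apply: (srD HA); [apply: Hc | apply: Hd].
have claim : forall x, lin cc B x -> exists N, cc (t ^+ N * x).
  move=> x; elim => [|c y x' Hc By _ [N2 IH]].
    exists 0%N; rewrite mulr0; split; first exact: (sr0 HA).
    by move=> z _; rewrite mul0r; exact: (sr0 HA).
  have [N1 [z [Sz ey]]] := BQ y By.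
  exists (N1 + N2)%N.
  have -> : t ^+ (N1 + N2) * (c * y + x') = t ^+ N2 * (c * z) + t ^+ N1 * (t ^+ N2 * x').
    rewrite ey exprD; have := tNz N1; set a1 := t ^+ N1 => h1; field; done.
  have h1 : cc (c * z) by rewrite mulrC; apply: cc_mul.
  apply: cc_add; apply: cc_mul => //.
have [N HN] := claim 1 C'; rewrite mulr1 in HN.
set s0 := t ^+ N.+1.
have As0 : A s0 by rewrite /s0 exprSr; apply: HN.2.
have s0z : s0 != 0 by apply: tNz.
have Bs0 : B s0^-1 by rewrite /s0 -exprVn; apply: (srX HB).
have As0y y : List.In y s -> A (s0 * y).
  by move=> ys; rewrite /s0 exprSr -mulrA; apply: HN.2; apply: Sty.
exists (fun c => A c /\ c != 0 /\ B c^-1); split.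
  split; first by move=> c [Ac [cz _]].
  split; first by split; [exact: (sr1 HA) | split; [exact: oner_neq0 | rewrite invr1; exact: (sr1 HB)]].
  move=> c d [Ac [cz Bc]] [Ad [dz Bd]]; split; first exact: (srM HA).
  by split; [rewrite mulf_neq0 | rewrite invfM; apply: (srM HB)].
move=> x0; split.
- move=> /Hs Hx; apply: (Hx (fun x => exists a c, A a /\ (A c /\ c != 0 /\ B c^-1) /\ x = a / c)).
  + have S1 : A 1 /\ (1:K) != 0 /\ B 1^-1.
      by split; [exact: (sr1 HA) | split; [exact: oner_neq0 | rewrite invr1; exact: (sr1 HB)]].
    split; first by exists 1, 1; split; [exact: (sr1 HA) | split; [exact: S1 | by rewrite divr1]].
    split.
    * move=> x y [a [c [Aa [[Ac [cz Bc]] ->]]]] [a' [c' [Aa' [[Ac' [cz' Bc']] ->]]]].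
      exists (a * c' - a' * c), (c * c'); split.
        by apply: (srB HA); apply: (srM HA).
      split; last by field; rewrite cz cz'.
      by split; [exact: (srM HA) | split; [rewrite mulf_neq0 | rewrite invfM; apply: (srM HB)]].
    * move=> x y [a [c [Aa [[Ac [cz Bc]] ->]]]] [a' [c' [Aa' [[Ac' [cz' Bc']] ->]]]].
      exists (a * a'), (c * c'); split; first exact: (srM HA).
      split; last by field; rewrite cz cz'.
      by split; [exact: (srM HA) | split; [rewrite mulf_neq0 | rewrite invfM; apply: (srM HB)]].
  + move=> a Aa; exists a, 1; split => //; split; last by rewrite divr1.
    by split; [exact: (sr1 HA) | split; [exact: oner_neq0 | rewrite invr1; exact: (sr1 HB)]].
  + move=> y ys; exists (s0 * y), s0; split; first exact: As0y.
    by split; [split | rewrite [s0 * y]mulrC mulfK].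
- move=> [a [c [Aa [[Ac [cz Bc]] ->]]]]; apply: (srM HB) => //; exact: HAB.
Qed.
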